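(* Let $\Sigma\subseteq\mathbb{N}$ be an infinite set. If quantum advantage samplers on $\Sigma$ exist, then $\mathbf{SampBPP}\neq\mathbf{SampBQP}$.
   Context: PPT = classical probabilistic polynomial-time, QPT = quantum polynomial-time; algorithms uniform; $\mathrm{SD}$ is statistical distance; $\mathcal{A}(1^\lambda)$ denotes the output distribution of $\mathcal{A}$ on input $1^\lambda$. QAS on $\Sigma$: a QPT algorithm $\mathcal{A}$ that on input $1^\lambda$ outputs a classical string, such that there is a polynomial $p$ such that for every PPT $\mathcal{B}$ there exists $\lambda^*$ with $\mathrm{SD}(\mathcal{A}(1^\lambda),\mathcal{B}(1^\lambda))>1/p(\lambda)$ for all $\lambda\ge\lambda^*$ in $\Sigma$. A sampling problem is a collection $\{D_x\}_{x\in\{0,1\}^*}$ of distributions with $D_x$ over $\{0,1\}^{q(|x|)}$ for a fixed polynomial $q$. $\mathbf{SampBPP}$: sampling problems for which a PPT $\mathcal{B}$ satisfies $\mathrm{SD}(\mathcal{B}(x,1^{\lfloor1/\epsilon\rfloor}),D_x)\le\epsilon$ for all $x$ and all $\epsilon>0$; $\mathbf{SampBQP}$: the same with $\mathcal{B}$ QPT. *)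

(* Defs.v *)
From Stdlib Require Import Reals List Bool Arith ZArith.
Import ListNotations.
Open Scope R_scope.

Definition bits := list bool.
Definition bits_eq_dec : forall x y : bits, {x = y} + {x <> y} :=
  list_eq_dec bool_dec.

Definition unary (n : nat) : bits := repeat true n.

(** polynomials with natural coefficients [c0; c1; ...] = c0 + c1 n + ... *)
Definition natpoly := list nat.
Fixpoint peval (p : natpoly) (n : nat) : nat :=
  match p with
  | [] => 0%nat
  | c :: p' => (c + n * peval p' n)%nat
  end.

Fixpoint allbits (n : nat) : list bits :=
  match n with
  | O => [[]]
  | S n' => map (cons false) (allbits n') ++ map (cons true) (allbits n')
  end.

Definition Dist := list (R * bits).

Definition prob (D : Dist) (y : bits) : R :=
  fold_right (fun wy acc => (if bits_eq_dec (snd wy) y then fst wy else 0) + acc) 0 D.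

Definition outcomes (D : Dist) : list bits := map snd D.

Definition valid_dist (D : Dist) : Prop :=
  Forall (fun wy => 0 <= fst wy) D /\
  fold_right (fun wy acc => fst wy + acc) 0 D = 1.

Definition SD (D1 D2 : Dist) : R :=
  / 2 * fold_right (fun y acc => Rabs (prob D1 y - prob D2 y) + acc) 0
          (nodup bits_eq_dec (outcomes D1 ++ outcomes D2)).

(** * Deterministic polynomial time: Bellantoni–Cook safe recursion
    (functions f(xs ; ys) with normal args xs and safe args ys; the safety
    discipline is enforced by the evaluator: subterms producing normal
    arguments only see normal arguments, and recursion is on the first normal
    argument with the recursive value placed in a safe position).
    The functions [fun xs => bc_eval t xs []] are exactly the polynomial-time
    computable functions on bit strings (Bellantoni–Cook 1992). *)
Inductive BC : Type :=
| BZero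
| BProjN (i : nat)
| BProjS (i : nat)
| BS0
| BS1
| BPred
| BCond
| BRec (g h0 h1 : BC)
| BComp (h : BC) (rs ts : list BC).

Fixpoint bc_eval (t : BC) (xs ys : list bits) {struct t} : bits :=
  match t with
  | BZero => []
  | BProjN i => nth i xs []
  | BProjS i => nth i ys []
  | BS0 => false :: nth 0 ys []
  | BS1 => true :: nth 0 ys []
  | BPred => tl (nth 0 ys [])
  | BCond => match nth 0 ys [] with
             | true :: _ => nth 2 ys []
             | _ => nth 1 ys []
             end
  | BRec g h0 h1 =>
      let xs' := tl xs in
      (fix rec (z : bits) : bits :=
         match z with
         | [] => bc_eval g xs' ys
         | b :: z' =>
             bc_eval (if b then h1 else h0) (z' :: xs') (rec z' :: ys)
         end) (hd [] xs)
  | BComp h rs ts =>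
      bc_eval h (map (fun r => bc_eval r xs []) rs)
                (map (fun s => bc_eval s xs ys) ts)
  end.

(** * PPT algorithms: a polynomial-time function f(x, r) together with a
    polynomial rho; on input x, r is uniform on {0,1}^{rho(|x|)}. *)
Record PPT := { ppt_prog : BC; ppt_rand : natpoly }.

Definition ppt_dist (B : PPT) (x : bits) : Dist :=
  let m := peval (ppt_rand B) (length x) in
  map (fun r => (/ 2 ^ m, bc_eval (ppt_prog B) [x; r] [])) (allbits m).

(** A polynomial-time generator maps x to a description of a
    circuit C_x; C_x is run on |0...0>, all qubits are measured in the
    computational basis and the designated output qubits are output. *)
Definition Cx := (R * R)%type.
Definition cadd (a b : Cx) : Cx := (fst a + fst b, snd a + snd b).
Definition cmul (a b : Cx) : Cx :=
  (fst a * fst b - snd a * snd b, fst a * snd b + snd a * fst b).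
Definition cscale (r : R) (a : Cx) : Cx := (r * fst a, r * snd a).
Definition cnorm2 (a : Cx) : R := fst a * fst a + snd a * snd a.
Definition omega8 : Cx := (/ sqrt 2, / sqrt 2).

Inductive gate := GH (i : nat) | GT (i : nat) | GX (i : nat) | GCNOT (i j : nat).

Record circuit := {
  c_qubits : nat;
  c_out : list nat;
  c_gates : list gate }.

(** decoding of circuit descriptions: numbers in unary 1^k0; format
    <n> <#outputs> <out_1> ... <out_k> then gates: 00<i> = H, 01<i> = T,
    10<i><j> = CNOT, 110<i> = X, anything else ends the list. *)
Fixpoint read_unary (s : bits) : nat * bits :=
  match s with
  | [] => (0%nat, [])
  | false :: s' => (0%nat, s')
  | true :: s' => let (k, r) := read_unary s' in (S k, r)
  end.

Fixpoint read_nums (k : nat) (s : bits) : list nat * bits :=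
  match k with
  | O => ([], s)
  | S k' => let (i, r) := read_unary s in
            let (l, r') := read_nums k' r in (i :: l, r')
  end.

Fixpoint read_gates (fuel : nat) (s : bits) : list gate :=
  match fuel with
  | O => []
  | S f =>
    match s with
    | false :: false :: s' => let (i, r) := read_unary s' in GH i :: read_gates f r
    | false :: true :: s' => let (i, r) := read_unary s' in GT i :: read_gates f r
    | true :: false :: s' =>
        let (i, r) := read_unary s' in
        let (j, r') := read_unary r in GCNOT i j :: read_gates f r'
    | true :: true :: false :: s' =>
        let (i, r) := read_unary s' in GX i :: read_gates f r
    | _ => []
    end
  end.

Definition decode_circuit (s : bits) : circuit :=
  let (n, r) := read_unary s in
  let (k, r1) := read_unary r in
  let (outs, r2) := read_nums k r1 in
  {| c_qubits := n; c_out := outs; c_gates := read_gates (length r2) r2 |}.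

(** states of n qubits: amplitude functions on n-bit strings *)
Fixpoint setbit (i : nat) (b : bool) (s : bits) : bits :=
  match s, i with
  | [], _ => []
  | _ :: s', O => b :: s'
  | c :: s', S i' => c :: setbit i' b s'
  end.

(** gates acting on out-of-range qubits (or CNOT with i = j) act as identity *)
Definition apply_gate (n : nat) (g : gate) (psi : bits -> Cx) : bits -> Cx :=
  match g with
  | GH i =>
      if Nat.ltb i n then
        fun s => cscale (/ sqrt 2)
                   (cadd (psi (setbit i false s))
                         (cscale (if nth i s false then -1 else 1)
                                 (psi (setbit i true s))))
      else psi
  | GT i =>
      if Nat.ltb i n then
        fun s => if nth i s false then cmul omega8 (psi s) else psi s
      else psi
  | GX i =>
      if Nat.ltb i n then fun s => psi (setbit i (negb (nth i s false)) s)
      else psi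
  | GCNOT i j =>
      if Nat.ltb i n && Nat.ltb j n && negb (Nat.eqb i j) then
        fun s => psi (if nth i s false then setbit j (negb (nth j s false)) s else s)
      else psi
  end.

Definition psi0 : bits -> Cx :=
  fun s => if forallb negb s then (1, 0) else (0, 0).

Definition circuit_dist (C : circuit) : Dist :=
  let psi := fold_left (fun ps g => apply_gate (c_qubits C) g ps) (c_gates C) psi0 in
  map (fun s => (cnorm2 (psi s), map (fun i => nth i s false) (c_out C)))
      (allbits (c_qubits C)).

Definition QPT := BC.

Definition qpt_dist (A : QPT) (x : bits) : Dist :=
  circuit_dist (decode_circuit (bc_eval A [x] [])).

Definition QAS (Sigma : nat -> Prop) (A : QPT) : Prop :=
  exists p : natpoly, (forall l, (0 < peval p l)%nat) /\
    forall B : PPT, exists lstar : nat, forall l, (lstar <= l)%nat -> Sigma l ->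
      SD (qpt_dist A (unary l)) (ppt_dist B (unary l)) > / INR (peval p l).

Record SampProblem := {
  sp_len : natpoly;
  sp_dist : bits -> Dist;
  sp_valid : forall x, valid_dist (sp_dist x);
  sp_support : forall x,
    Forall (fun wy => length (snd wy) = peval sp_len (length x)) (sp_dist x) }.

Definition enc_pair (x y : bits) : bits :=
  flat_map (fun b => [b; b]) x ++ [true; false] ++ y.

Definition floor_nat (r : R) : nat := Z.to_nat (Int_part r).

Definition SampBPP (S : SampProblem) : Prop :=
  exists B : PPT, forall (x : bits) (eps : R), 0 < eps ->
    SD (ppt_dist B (enc_pair x (unary (floor_nat (/ eps))))) (sp_dist S x) <= eps.

Definition SampBQP (S : SampProblem) : Prop :=
  exists A : QPT, forall (x : bits) (eps : R), 0 < eps ->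
    SD (qpt_dist A (enc_pair x (unary (floor_nat (/ eps))))) (sp_dist S x) <= eps.

(* Main.v *)
Require Import Defs.
From Stdlib Require Import Reals List Arith.
From Stdlib Require Import Lia Lra Permutation ZArith.
Import ListNotations.

Fixpoint padd (p q : natpoly) : natpoly :=
  match p, q with
  | [], q => q
  | p, [] => p
  | a :: p', b :: q' => (a + b)%nat :: padd p' q'
  end.
Lemma peval_padd p q n : peval (padd p q) n = (peval p n + peval q n)%nat.
Proof. revert q; induction p as [|a p IH]; intros [|b q]; simpl; try lia.
  rewrite IH. lia. Qed.

Definition pscale (c : nat) (p : natpoly) : natpoly := map (Nat.mul c) p.
Lemma peval_pscale c p n : peval (pscale c p) n = (c * peval p n)%nat.
Proof. induction p; simpl; [lia|]. rewrite IHp. lia. Qed.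

Fixpoint pmul (p q : natpoly) : natpoly :=
  match p with [] => [] | a :: p' => padd (pscale a q) (0%nat :: pmul p' q) end.
Lemma peval_pmul p q n : peval (pmul p q) n = (peval p n * peval q n)%nat.
Proof. induction p; simpl; [lia|]. rewrite peval_padd, peval_pscale. simpl. rewrite IHp. lia. Qed.

Fixpoint pcomp (p q : natpoly) : natpoly :=
  match p with [] => [] | a :: p' => padd [a] (pmul q (pcomp p' q)) end.
Lemma peval_pcomp p q n : peval (pcomp p q) n = peval p (peval q n).
Proof. induction p as [|a p IHp]; [reflexivity|].
  change (pcomp (a::p) q) with (padd [a] (pmul q (pcomp p q))).
  rewrite peval_padd, peval_pmul, IHp. simpl. lia. Qed.

Lemma peval_mono p n m : (n <= m)%nat -> (peval p n <= peval p m)%nat.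
Proof. intros H; induction p; simpl; [lia|]. pose proof (Nat.mul_le_mono _ _ _ _ H IHp). lia. Qed.

Definition pX : natpoly := [0%nat; 1%nat].
Lemma peval_pX n : peval pX n = n.
Proof. simpl. lia. Qed.

Fixpoint recf (g h0 h1 : BC) (xs ys : list bits) (z : bits) : bits :=
  match z with
  | [] => bc_eval g xs ys
  | b :: z' => bc_eval (if b then h1 else h0) (z' :: xs) (recf g h0 h1 xs ys z' :: ys)
  end.

Lemma bc_eval_rec g h0 h1 xs ys :
  bc_eval (BRec g h0 h1) xs ys = recf g h0 h1 (tl xs) ys (hd [] xs).
Proof. simpl. induction (hd [] xs); simpl; congruence. Qed.

Lemma bc_eval_comp h rs ts xs ys :
  bc_eval (BComp h rs ts) xs ys =
  bc_eval h (map (fun r => bc_eval r xs []) rs) (map (fun s => bc_eval s xs ys) ts).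
Proof. reflexivity. Qed.

Definition sumlen (xs : list bits) : nat := fold_right (fun x a => length x + a)%nat 0%nat xs.
Definition maxlen (ys : list bits) : nat := fold_right (fun y a => Nat.max (length y) a) 0%nat ys.

Lemma nth_sumlen i xs : (length (nth i xs []) <= sumlen xs)%nat.
Proof. revert i; induction xs; intros [|i]; simpl; try lia. specialize (IHxs i); lia. Qed.
Lemma nth_maxlen i ys : (length (nth i ys []) <= maxlen ys)%nat.
Proof. revert i; induction ys; intros [|i]; simpl; try lia. specialize (IHys i); lia. Qed.

Section BCInd.
Variable Pr : BC -> Prop.
Hypothesis H0 : Pr BZero.
Hypothesis H1 : forall i, Pr (BProjN i).
Hypothesis H2 : forall i, Pr (BProjS i).
Hypothesis H3 : Pr BS0.
Hypothesis H4 : Pr BS1.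
Hypothesis H5 : Pr BPred.
Hypothesis H6 : Pr BCond.
Hypothesis H7 : forall g h0 h1, Pr g -> Pr h0 -> Pr h1 -> Pr (BRec g h0 h1).
Hypothesis H8 : forall h rs ts, Pr h -> Forall Pr rs -> Forall Pr ts -> Pr (BComp h rs ts).
Fixpoint BC_ind2 (t : BC) : Pr t :=
  match t with
  | BZero => H0 | BProjN i => H1 i | BProjS i => H2 i | BS0 => H3 | BS1 => H4
  | BPred => H5 | BCond => H6
  | BRec g h0 h1 => H7 g h0 h1 (BC_ind2 g) (BC_ind2 h0) (BC_ind2 h1)
  | BComp h rs ts => H8 h rs ts (BC_ind2 h)
      ((fix F (l : list BC) : Forall Pr l :=
         match l with [] => Forall_nil _ | a :: l' => Forall_cons _ (BC_ind2 a) (F l') end) rs)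
      ((fix F (l : list BC) : Forall Pr l :=
         match l with [] => Forall_nil _ | a :: l' => Forall_cons _ (BC_ind2 a) (F l') end) ts)
  end.
End BCInd.

Definition Bnd (t : BC) (P : natpoly) : Prop :=
  forall xs ys, (length (bc_eval t xs ys) <= peval P (sumlen xs) + maxlen ys)%nat.

Lemma Bnd_mono t P Q : Bnd t P -> (forall n, peval P n <= peval Q n)%nat -> Bnd t Q.
Proof. intros H HQ xs ys. specialize (H xs ys). specialize (HQ (sumlen xs)). lia. Qed.

Lemma Bnd_common l : Forall (fun t => exists P, Bnd t P) l -> exists P, Forall (fun t => Bnd t P) l.
Proof. induction 1 as [|t l [P HP] _ [Q HQ]].
  - exists []; constructor.
  - exists (padd P Q). constructor.
    + apply (Bnd_mono t P); auto. intros; rewrite peval_padd; lia.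
    + eapply Forall_impl; [|exact HQ]. intros t' Ht'. apply (Bnd_mono t' Q); auto.
      intros; rewrite peval_padd; lia. Qed.

Lemma sumlen_map rs P xs : Forall (fun t => Bnd t P) rs ->
  (sumlen (map (fun r => bc_eval r xs []) rs) <= length rs * peval P (sumlen xs))%nat.
Proof. induction 1; simpl; [lia|]. specialize (H xs []). simpl in H. lia. Qed.

Lemma maxlen_map ts P xs ys : Forall (fun t => Bnd t P) ts ->
  (maxlen (map (fun s => bc_eval s xs ys) ts) <= peval P (sumlen xs) + maxlen ys)%nat.
Proof. induction 1; simpl; [lia|]. specialize (H xs ys). lia. Qed.

Lemma bc_bound t : exists P, Bnd t P.
Proof.
  induction t using BC_ind2.
  - exists []; intros xs ys; simpl; (unfold bits in *; lia).
  - exists pX; intros xs ys; simpl bc_eval; rewrite peval_pX. pose proof (nth_sumlen i xs). (unfold bits in *; lia).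
  - exists []; intros xs ys; simpl bc_eval. pose proof (nth_maxlen i ys). simpl. (unfold bits in *; lia).
  - exists [1%nat]; intros xs ys; simpl bc_eval. pose proof (nth_maxlen 0 ys). simpl. (unfold bits in *; lia).
  - exists [1%nat]; intros xs ys; simpl bc_eval. pose proof (nth_maxlen 0 ys). simpl. (unfold bits in *; lia).
  - exists []; intros xs ys; simpl bc_eval. pose proof (nth_maxlen 0 ys).
    assert (length (tl (nth 0 ys [])) <= length (nth 0 ys []))%nat by (destruct (nth 0 ys []); simpl; lia). simpl peval. unfold bits in *; lia.
  - exists []; intros xs ys; simpl bc_eval. pose proof (nth_maxlen 1 ys). pose proof (nth_maxlen 2 ys).
    simpl. destruct (nth 0 ys []) as [|[|] ?]; (unfold bits in *; lia).
  - destruct IHt1 as [Pg Hg], IHt2 as [P0 H0], IHt3 as [P1 H1].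
    set (Ph := padd P0 P1).
    exists (padd (0%nat :: Ph) Pg). intros xs ys. rewrite bc_eval_rec.
    set (S := sumlen xs).
    assert (Hs : (length (hd [] xs) + sumlen (tl xs) <= S)%nat) by (unfold S; destruct xs; simpl; lia).
    assert (forall z, (length z + sumlen (tl xs) <= S)%nat ->
      (length (recf t1 t2 t3 (tl xs) ys z) <= length z * peval Ph S + peval Pg S + maxlen ys)%nat).
    { induction z as [|b z IH]; intros Hz; simpl.
      - specialize (Hg (tl xs) ys). simpl in Hz. pose proof (peval_mono Pg _ _ Hz). (unfold bits in *; lia).
      - simpl in Hz. specialize (IH ltac:(lia)).
        assert (Hb : (length (bc_eval (if b then t3 else t2) (z :: tl xs)
                  (recf t1 t2 t3 (tl xs) ys z :: ys)) <=
                  peval Ph (length z + sumlen (tl xs)) + Nat.max (length (recf t1 t2 t3 (tl xs) ys z)) (maxlen ys))%nat).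
        { destruct b; [specialize (H1 (z :: tl xs) (recf t1 t2 t3 (tl xs) ys z :: ys))
                      |specialize (H0 (z :: tl xs) (recf t1 t2 t3 (tl xs) ys z :: ys))];
          simpl in *; unfold Ph; rewrite peval_padd; (unfold bits in *; lia). }
        pose proof (peval_mono Ph (length z + sumlen (tl xs)) S ltac:(lia)). (unfold bits in *; nia). }
    specialize (H (hd [] xs) Hs). rewrite peval_padd. simpl. (unfold bits in *; nia).
  - destruct IHt as [Ph Hh].
    destruct (Bnd_common _ H) as [Pr HPr]. destruct (Bnd_common _ H0) as [Pt HPt].
    exists (padd (pcomp Ph (pscale (length rs) Pr)) Pt). intros xs ys. rewrite bc_eval_comp.
    specialize (Hh (map (fun r => bc_eval r xs []) rs) (map (fun s => bc_eval s xs ys) ts)).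
    pose proof (sumlen_map rs Pr xs HPr). pose proof (maxlen_map ts Pt xs ys HPt).
    pose proof (peval_mono Ph _ _ H1).
    rewrite peval_padd, peval_pcomp, peval_pscale. (unfold bits in *; lia).
Qed.

Fixpoint leadn (s : bits) : nat :=
  match s with true :: s' => S (leadn s') | _ => 0 end.

Definition LEAD : BC := BRec BZero BZero BS1.
Lemma LEAD_eval a xs ys : bc_eval LEAD (a :: xs) ys = repeat true (leadn a).
Proof. unfold LEAD. rewrite bc_eval_rec. cbn [hd tl]. induction a as [|[|] a IH]; simpl; auto.
  rewrite IH; reflexivity. Qed.

Definition DROP : BC := BRec (BProjS 0) BPred BPred.
Lemma tl_skipn {A} n (s : list A) : tl (skipn n s) = skipn n (tl s).
Proof. revert s; induction n; intros s; [reflexivity|]. destruct s as [|x s]; [reflexivity|]. change (tl (skipn n s) = skipn (S n) s). rewrite IHn. destruct s; [destruct n|]; reflexivity. Qed.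
Lemma DROP_eval a s xs ys : bc_eval DROP (a :: xs) (s :: ys) = skipn (length a) s.
Proof. unfold DROP. rewrite bc_eval_rec. cbn [hd tl]. induction a as [|b a IH]; simpl; auto.
  destruct b; simpl; rewrite IH, tl_skipn; destruct s; simpl; auto; destruct (length a); reflexivity. Qed.

Definition APP : BC := BRec (BProjS 0) BS0 BS1.
Lemma APP_eval a s xs ys : bc_eval APP (a :: xs) (s :: ys) = a ++ s.
Proof. unfold APP. rewrite bc_eval_rec. cbn [hd tl]. induction a as [|b a IH]; simpl; auto.
  destruct b; simpl; rewrite IH; reflexivity. Qed.

Definition DBL : BC := BRec BZero (BComp BS0 [] [BS0]) (BComp BS1 [] [BS1]).
Lemma DBL_eval a xs ys : bc_eval DBL (a :: xs) ys = flat_map (fun b => [b; b]) a.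
Proof. unfold DBL. rewrite bc_eval_rec. cbn [hd tl]. induction a as [|b a IH]; simpl; auto.
  destruct b; simpl; rewrite IH; reflexivity. Qed.

Definition MULT : BC := BRec BZero (BComp APP [BProjN 1] [BProjS 0]) (BComp APP [BProjN 1] [BProjS 0]).
Lemma MULT_eval a b xs ys : bc_eval MULT (a :: b :: xs) ys = concat (repeat b (length a)).
Proof. unfold MULT. rewrite bc_eval_rec. cbn [hd tl]. simpl tl. induction a as [|c a IH]; simpl; auto.
  destruct c; rewrite bc_eval_comp; simpl map; simpl nth; rewrite APP_eval, IH; reflexivity. Qed.

Definition F1 : BC := BComp BS0 [] [BZero].
Lemma F1_eval xs ys : bc_eval F1 xs ys = [false].
Proof. reflexivity. Qed.

Fixpoint UC (c : nat) : BC := match c with O => BZero | S c => BComp BS1 [] [UC c] end.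
Lemma UC_eval c xs ys : bc_eval (UC c) xs ys = unary c.
Proof. induction c; simpl; auto. rewrite IHc; reflexivity. Qed.

Lemma concat_unary k m : concat (repeat (unary m) k) = unary (k * m).
Proof. induction k; simpl; auto. rewrite IHk. unfold unary. rewrite repeat_app. reflexivity. Qed.

Lemma ProjN_eval i xs ys : bc_eval (BProjN i) xs ys = nth i xs [].
Proof. reflexivity. Qed.
Lemma ProjS_eval i xs ys : bc_eval (BProjS i) xs ys = nth i ys [].
Proof. reflexivity. Qed.

Fixpoint POLY (p : natpoly) : BC :=
  match p with
  | [] => BZero
  | c :: p' => BComp APP [UC c] [BComp MULT [BProjN 0; POLY p'] []]
  end.
Lemma POLY_eval p l xs ys : bc_eval (POLY p) (unary l :: xs) ys = unary (peval p l).
Proof. revert ys; induction p as [|c p IH]; intros ys; [reflexivity|].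
  change (POLY (c::p)) with (BComp APP [UC c] [BComp MULT [BProjN 0; POLY p] []]).
  rewrite bc_eval_comp. cbn [map]. rewrite APP_eval, UC_eval, bc_eval_comp. cbn [map].
  rewrite ProjN_eval. cbn [nth]. rewrite MULT_eval, IH.
  unfold unary at 3. rewrite repeat_length, concat_unary. unfold unary. rewrite <- repeat_app. reflexivity. Qed.

Definition HSTEP : BC := BComp BCond [] [BProjS 0; BComp BS1 [] [BPred]; BComp BS0 [] [BComp BS1 [] [BPred]]].
Definition HALF : BC := BComp BPred [] [BRec (BComp BS0 [] [BZero]) HSTEP HSTEP].
Lemma HALF_rec a xs ys : exists k,
  ((length a = 2 * k)%nat /\ recf (BComp BS0 [] [BZero]) HSTEP HSTEP xs ys a = false :: repeat true k) \/
  ((length a = 2 * k + 1)%nat /\ recf (BComp BS0 [] [BZero]) HSTEP HSTEP xs ys a = true :: repeat true k).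
Proof. induction a as [|b a IH].
  - exists 0%nat. left. split; reflexivity.
  - destruct IH as [k [[H1 H2]|[H1 H2]]].
    + exists k. right. split; [simpl; lia|]. simpl. rewrite H2. destruct b; reflexivity.
    + exists (S k). left. split; [simpl; lia|]. simpl. rewrite H2. destruct b; reflexivity. Qed.
Lemma HALF_eval a xs ys k : (length a = 2 * k \/ length a = 2 * k + 1)%nat ->
  bc_eval HALF (a :: xs) ys = unary k.
Proof. intros H. unfold HALF. rewrite bc_eval_comp. cbn [map]. rewrite bc_eval_rec. cbn [hd tl]. simpl tl.
  destruct (HALF_rec a xs ys) as [k' [[H1 H2]|[H1 H2]]]; rewrite H2; simpl;
  replace k' with k by lia; reflexivity. Qed.

Definition PRE : BC := BRec BZero BS1 (BComp BCond [] [BProjS 0; BZero; BS1]).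
Fixpoint pref (s : bits) : bits :=
  match s with
  | [] => []
  | false :: z => true :: pref z
  | true :: z => match pref z with [] => [] | v => true :: v end
  end.
Lemma pref_all_true s : (forall v, pref s = v -> v = [] \/ exists w, v = true :: w).
Proof. intros v <-. destruct s as [|[|] s]; simpl; auto.
  - destruct (pref s); auto. right; eauto.
  - right; eauto. Qed.
Lemma PRE_eval a xs ys : bc_eval PRE (a :: xs) ys = pref a.
Proof. unfold PRE. rewrite bc_eval_rec. cbn [hd tl]. induction a as [|b a IH]; simpl; auto.
  destruct b; simpl; rewrite IH; auto.
  destruct (pref_all_true a (pref a) eq_refl) as [->|[w ->]]; reflexivity. Qed.

Lemma pref_unary e : pref (unary e) = [].
Proof. induction e; [reflexivity|]. change (unary (S e)) with (true :: unary e). cbn [pref]. rewrite IHe. reflexivity. Qed.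

Lemma pref_enc x e : pref (enc_pair x (unary e)) = unary (2 * length x + 2).
Proof. induction x as [|b x IH].
  - change (enc_pair [] (unary e)) with (true :: false :: unary e).
    cbn [pref]. rewrite pref_unary. reflexivity.
  - change (enc_pair (b :: x) (unary e)) with (b :: b :: enc_pair x (unary e)).
    replace (2 * length (b :: x) + 2)%nat with (S (S (2 * length x + 2))) by (simpl; lia).
    destruct b; cbn [pref]; rewrite IH; replace (2 * length x + 2)%nat with (S (S (2 * length x))) by lia; reflexivity. Qed.

Lemma leadn_enc x y : (leadn (enc_pair x y) = 2 * leadn x \/ leadn (enc_pair x y) = 2 * leadn x + 1)%nat.
Proof. induction x as [|b x IH].
  - right. reflexivity.
  - change (enc_pair (b :: x) y) with (b :: b :: enc_pair x y).
    destruct b; cbn [leadn]; [|left; reflexivity]. lia. Qed.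

Open Scope R_scope.

Definition sumR (f : bits -> R) (L : list bits) : R :=
  fold_right (fun y acc => f y + acc) 0 L.

Lemma sumR_ext_in f g L : (forall y, In y L -> f y = g y) -> sumR f L = sumR g L.
Proof. induction L as [|a L IH]; simpl; intros H; auto.
  rewrite H by auto. rewrite IH; auto. Qed.

Lemma sumR_plus f g L : sumR (fun y => f y + g y) L = sumR f L + sumR g L.
Proof. induction L; simpl; [ring|rewrite IHL; ring]. Qed.

Lemma sumR_opp f L : sumR (fun y => - f y) L = - sumR f L.
Proof. induction L; simpl; [ring|rewrite IHL; ring]. Qed.

Lemma sumR_scal c f L : sumR (fun y => c * f y) L = c * sumR f L.
Proof. induction L; simpl; [ring|rewrite IHL; ring]. Qed.

Lemma sumR_zero L : sumR (fun _ => 0) L = 0.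
Proof. induction L; simpl; [ring|rewrite IHL; ring]. Qed.

Lemma sumR_le f g L : (forall y, In y L -> f y <= g y) -> sumR f L <= sumR g L.
Proof. induction L as [|a L IH]; simpl; intros H; [lra|].
  pose proof (H a (or_introl eq_refl)). pose proof (IH (fun y Hy => H y (or_intror Hy))). lra. Qed.

Lemma Rabs_sumR f L : Rabs (sumR f L) <= sumR (fun y => Rabs (f y)) L.
Proof. induction L; simpl. rewrite Rabs_R0; lra.
  eapply Rle_trans; [apply Rabs_triang|]. lra. Qed.

Lemma sumR_perm f L L' : Permutation L L' -> sumR f L = sumR f L'.
Proof. induction 1; simpl; try lra. Qed.

Lemma sumR_map f g L : sumR f (map g L) = sumR (fun y => f (g y)) L.
Proof. induction L; simpl; congruence. Qed.

Lemma sumR_exch (F : bits -> bits -> R) U V :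
  sumR (fun z => sumR (fun y => F y z) U) V = sumR (fun y => sumR (fun z => F y z) V) U.
Proof. induction V as [|b V IH]; simpl.
  - symmetry; apply sumR_zero.
  - rewrite IH. rewrite <- sumR_plus. reflexivity. Qed.

Lemma sumR_ind_in a c U : NoDup U -> In a U ->
  sumR (fun y => if bits_eq_dec a y then c else 0) U = c.
Proof. induction U as [|b U IH]; simpl; intros Hn Hi; [contradiction|].
  inversion Hn; subst.
  destruct (bits_eq_dec a b) as [e|ne].
  - subst. rewrite (sumR_ext_in _ (fun _ => 0)). rewrite sumR_zero; ring.
    intros y Hy. destruct (bits_eq_dec b y); [subst; contradiction|auto].
  - destruct Hi as [Hi|Hi]; [congruence|]. rewrite IH; auto; ring. Qed.

Lemma SD_sum P Q : SD P Q = / 2 * sumR (fun y => Rabs (prob P y - prob Q y))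
   (nodup bits_eq_dec (outcomes P ++ outcomes Q)).
Proof. reflexivity. Qed.

Lemma SD_self P : SD P P = 0.
Proof. rewrite SD_sum. rewrite (sumR_ext_in _ (fun _ => 0)). rewrite sumR_zero; ring.
  intros; replace (prob P y - prob P y) with 0 by ring; apply Rabs_R0. Qed.

Lemma SD_sym P Q : SD P Q = SD Q P.
Proof. rewrite !SD_sum. f_equal.
  rewrite (sumR_ext_in _ (fun y => Rabs (prob Q y - prob P y))).
  2:{ intros; apply Rabs_minus_sym. }
  apply sumR_perm. apply NoDup_Permutation; try apply NoDup_nodup.
  intros x. rewrite !nodup_In, !in_app_iff. tauto. Qed.

Definition fmapD (f : bits -> bits) (D : Dist) : Dist :=
  map (fun wy => (fst wy, f (snd wy))) D.

Lemma prob_fmap f P z U : NoDup U -> incl (outcomes P) U ->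
  prob (fmapD f P) z = sumR (fun y => if bits_eq_dec (f y) z then prob P y else 0) U.
Proof. intros Hn. induction P as [|wy P IH]; intros Hi.
  - simpl. rewrite (sumR_ext_in _ (fun _ => 0)). rewrite sumR_zero; ring.
    intros; destruct (bits_eq_dec (f y) z); auto.
  - simpl. rewrite IH by (intros x Hx; apply Hi; simpl; auto).
    symmetry.
    rewrite (sumR_ext_in _ (fun y => (if bits_eq_dec (snd wy) y then
        (if bits_eq_dec (f (snd wy)) z then fst wy else 0) else 0) +
        (if bits_eq_dec (f y) z then prob P y else 0))).
    + rewrite sumR_plus. rewrite sumR_ind_in; auto. apply Hi; simpl; auto.
    + intros y _. destruct (bits_eq_dec (snd wy) y);
      destruct (bits_eq_dec (f (snd wy)) z); destruct (bits_eq_dec (f y) z); subst;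
      try congruence; ring.
Qed.

Lemma SD_dp f P Q : SD (fmapD f P) (fmapD f Q) <= SD P Q.
Proof.
  set (U := nodup bits_eq_dec (outcomes P ++ outcomes Q)).
  set (V := nodup bits_eq_dec (outcomes (fmapD f P) ++ outcomes (fmapD f Q))).
  assert (HU : NoDup U) by apply NoDup_nodup.
  assert (HV : NoDup V) by apply NoDup_nodup.
  rewrite !SD_sum. fold U V. apply Rmult_le_compat_l; [lra|].
  assert (HP : incl (outcomes P) U).
  { intros x Hx; unfold U; rewrite nodup_In, in_app_iff; auto. }
  assert (HQ : incl (outcomes Q) U).
  { intros x Hx; unfold U; rewrite nodup_In, in_app_iff; auto. }
  eapply Rle_trans.
  { apply sumR_le. intros z _.
    rewrite (prob_fmap f P z U HU HP), (prob_fmap f Q z U HU HQ).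
    unfold Rminus at 1. rewrite <- (sumR_opp), <- sumR_plus.
    eapply Rle_trans; [apply Rabs_sumR|].
    apply Req_le. apply (sumR_ext_in _ (fun y => if bits_eq_dec (f y) z then
        Rabs (prob P y - prob Q y) else 0)).
    intros y _. destruct (bits_eq_dec (f y) z).
    - f_equal; ring.
    - replace (0 + - 0) with 0 by ring. apply Rabs_R0. }
  rewrite (sumR_exch (fun y z => if bits_eq_dec (f y) z then Rabs (prob P y - prob Q y) else 0)).
  apply Req_le. apply sumR_ext_in. intros y Hy. apply sumR_ind_in; auto.
  unfold V. rewrite nodup_In. unfold U in Hy. rewrite nodup_In in Hy.
  unfold outcomes, fmapD in *. rewrite <- map_app. rewrite <- map_app in Hy.
  idtac.
  apply in_map_iff in Hy. destruct Hy as [wy [<- Hwy]].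
  idtac.
  rewrite <- map_app, map_map. apply in_map_iff. exists wy; split; auto. Qed.

Lemma read_unary_eq s : read_unary s = (leadn s, skipn (S (leadn s)) s).
Proof. induction s as [|[|] s IH]; simpl; auto. rewrite IH. reflexivity. Qed.

Lemma read_unary_app n r : read_unary (repeat true n ++ false :: r) = (n, r).
Proof. induction n; simpl; auto. rewrite IHn. reflexivity. Qed.

Lemma decode_eq s n r k r1 outs r2 : read_unary s = (n, r) -> read_unary r = (k, r1) ->
  read_nums k r1 = (outs, r2) ->
  decode_circuit s = {| c_qubits := n; c_out := outs; c_gates := read_gates (length r2) r2 |}.
Proof. intros H1 H2 H3. unfold decode_circuit. rewrite H1, H2, H3. reflexivity. Qed.

Lemma read_nums_len k r : length (fst (read_nums k r)) = k.
Proof. revert r; induction k; intros r; simpl; auto.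
  destruct (read_unary r) as [i r']. specialize (IHk r'). destruct (read_nums k r'). simpl in *. auto. Qed.

Lemma read_nums_pad n j k R : read_nums (j + k) (concat (repeat (repeat true n ++ [false]) j) ++ R)
  = (repeat n j ++ fst (read_nums k R), snd (read_nums k R)).
Proof. induction j; simpl.
  - destruct (read_nums k R); reflexivity.
  - rewrite <- app_assoc. simpl. rewrite <- app_assoc. simpl. rewrite read_unary_app, IHj. reflexivity. Qed.

Definition padD (j : nat) (D : Dist) : Dist := fmapD (fun y => repeat false j ++ y) D.

Fixpoint allbits_in s n : In s (allbits n) <-> length s = n.
Proof. destruct n as [|n]; simpl.
  - split; [intros [<-|[]]; reflexivity|]. destruct s; simpl; [auto|discriminate].
  - rewrite in_app_iff, !in_map_iff. split.
    + intros [[x [<- Hx]]|[x [<- Hx]]]; simpl; f_equal; apply allbits_in; auto.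
    + destruct s as [|[|] s]; simpl; intros H; [discriminate| |]; injection H as H.
      * right. exists s; split; auto. apply allbits_in; auto.
      * left. exists s; split; auto. apply allbits_in; auto. Qed.

Lemma allbits_nodup n : NoDup (allbits n).
Proof. induction n; simpl. constructor; [simpl; auto|constructor].
  apply NoDup_app.
  - apply NoDup_map_NoDup_ForallPairs; auto. intros x y _ _ H; injection H; auto.
  - apply NoDup_map_NoDup_ForallPairs; auto. intros x y _ _ H; injection H; auto.
  - intros x Hx Hy. apply in_map_iff in Hx, Hy. destruct Hx as [a [<- _]], Hy as [b [Hb _]]. discriminate. Qed.

Lemma circuit_pad n j outs gs :
  circuit_dist {| c_qubits := n; c_out := repeat n j ++ outs; c_gates := gs |} =
  padD j (circuit_dist {| c_qubits := n; c_out := outs; c_gates := gs |}).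
Proof. unfold circuit_dist, padD, fmapD. simpl. rewrite map_map. apply map_ext_in.
  intros s Hs. apply allbits_in in Hs. simpl. f_equal. rewrite map_app. f_equal.
  induction j; simpl; auto. rewrite IHj. f_equal. apply nth_overflow. lia. Qed.

Lemma setbit_len i b s : length (setbit i b s) = length s.
Proof. revert i; induction s; intros [|i]; simpl; auto. Qed.
Lemma setbit_nth_eq i b s : (i < length s)%nat -> nth i (setbit i b s) false = b.
Proof. revert i; induction s; intros [|i]; simpl; intros H; try lia; auto. apply IHs; lia. Qed.
Lemma setbit_nth_neq i j b s : i <> j -> nth j (setbit i b s) false = nth j s false.
Proof. revert i j; induction s; intros [|i] [|j]; simpl; intros H; auto; try lia. Qed.
Lemma setbit_setbit i b b' s : setbit i b (setbit i b' s) = setbit i b s.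
Proof. revert i; induction s; intros [|i]; simpl; auto. rewrite IHs; auto. Qed.
Lemma setbit_nth i s : setbit i (nth i s false) s = s.
Proof. revert i; induction s; intros [|i]; simpl; auto. rewrite IHs; auto. Qed.

Definition flip i s := setbit i (negb (nth i s false)) s.
Lemma flip_len i s : length (flip i s) = length s.
Proof. apply setbit_len. Qed.
Lemma flip_nth i s : (i < length s)%nat -> nth i (flip i s) false = negb (nth i s false).
Proof. intros; apply setbit_nth_eq; auto. Qed.
Lemma flip_flip i s : (i < length s)%nat -> flip i (flip i s) = s.
Proof. intros H. unfold flip at 1. rewrite flip_nth by auto. rewrite Bool.negb_involutive.
  unfold flip. rewrite setbit_setbit. apply setbit_nth. Qed.

Definition W n (psi : bits -> Cx) := sumR (fun s => cnorm2 (psi s)) (allbits n).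

Lemma sum_bij n (sg : bits -> bits) f :
  (forall s, length s = n -> length (sg s) = n) ->
  (forall s, length s = n -> sg (sg s) = s) ->
  sumR (fun s => f (sg s)) (allbits n) = sumR f (allbits n).
Proof. intros H1 H2. rewrite <- sumR_map. apply sumR_perm.
  apply NoDup_Permutation.
  - apply NoDup_map_NoDup_ForallPairs; [|apply allbits_nodup].
    intros x y Hx Hy E. apply allbits_in in Hx, Hy. rewrite <- (H2 x), <- (H2 y), E; auto.
  - apply allbits_nodup.
  - intros x. rewrite in_map_iff, allbits_in. split.
    + intros [y [<- Hy]]. apply allbits_in in Hy. auto.
    + intros Hx. exists (sg x). split; auto. apply allbits_in; auto. Qed.

Lemma cnorm2_ge0 a : 0 <= cnorm2 a.
Proof. unfold cnorm2. nra. Qed.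

Lemma u2 : / sqrt 2 * / sqrt 2 = / 2.
Proof. rewrite <- Rinv_mult. rewrite sqrt_sqrt; lra. Qed.

Lemma cnorm2_T a : cnorm2 (cmul omega8 a) = cnorm2 a.
Proof. unfold cnorm2, cmul, omega8; simpl. pose proof u2.
  set (u := / sqrt 2) in *. destruct a as [x y]; simpl.
  transitivity ((u * u + u * u) * (x * x + y * y)); [ring|]. rewrite H. field. Qed.

Lemma Hpt a b (t : R) : t = 1 \/ t = -1 ->
  cnorm2 (cscale (/ sqrt 2) (cadd a (cscale t b))) =
  / 2 * (cnorm2 a + cnorm2 b) + t * (fst a * fst b + snd a * snd b).
Proof. intros Ht. pose proof u2. unfold cnorm2, cscale, cadd. simpl.
  set (u := / sqrt 2) in *. destruct a as [a1 a2], b as [b1 b2]; simpl.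
  transitivity (u * u * ((a1 + t * b1) * (a1 + t * b1) + (a2 + t * b2) * (a2 + t * b2))); [ring|].
  rewrite H. destruct Ht; subst; field. Qed.

Lemma W_gate n g psi : W n (apply_gate n g psi) = W n psi.
Proof. destruct g as [i|i|i|i j]; simpl.
  -
    destruct (Nat.ltb i n) eqn:Hi; [|reflexivity]. apply Nat.ltb_lt in Hi. unfold W.
    set (t := fun s : bits => if nth i s false then -1 else 1).
    set (X := fun s : bits => fst (psi (setbit i false s)) * fst (psi (setbit i true s)) +
                              snd (psi (setbit i false s)) * snd (psi (setbit i true s))).
    rewrite (sumR_ext_in _ (fun s => / 2 * (cnorm2 (psi s) + cnorm2 (psi (flip i s))) + t s * X s)).
    2:{ intros s Hs. apply allbits_in in Hs. rewrite Hpt.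
        2:{ destruct (nth i s false); [right|left]; reflexivity. }
        unfold t, X, flip. destruct (nth i s false) eqn:E; simpl;
        pose proof (setbit_nth i s) as Es; rewrite E in Es.
        - rewrite Es. ring.
        - rewrite Es. ring. }
    rewrite sumR_plus, sumR_scal, sumR_plus.
    rewrite (sum_bij n (flip i) (fun s => cnorm2 (psi s))).
    2:{ intros; rewrite flip_len; auto. } 2:{ intros; apply flip_flip; lia. }
    assert (HS : sumR (fun s => t s * X s) (allbits n) = 0).
    { assert (E : sumR (fun s => t (flip i s) * X (flip i s)) (allbits n) =
                  sumR (fun s => - (t s * X s)) (allbits n)).
      { apply sumR_ext_in. intros s Hs. apply allbits_in in Hs. unfold t, X.
        rewrite flip_nth by lia. unfold flip. rewrite !setbit_setbit.
        destruct (nth i s false); simpl; ring. }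
      rewrite (sum_bij n (flip i) (fun s => t s * X s)) in E.
      2:{ intros; rewrite flip_len; auto. } 2:{ intros; apply flip_flip; lia. }
      rewrite sumR_opp in E. lra. }
    rewrite HS. lra.
  -
    destruct (Nat.ltb i n); [|reflexivity]. unfold W. apply sumR_ext_in.
    intros s _. destruct (nth i s false); auto. apply cnorm2_T.
  -
    destruct (Nat.ltb i n) eqn:Hi; [|reflexivity]. apply Nat.ltb_lt in Hi. unfold W.
    apply (sum_bij n (flip i) (fun s => cnorm2 (psi s))).
    + intros; rewrite flip_len; auto.
    + intros; apply flip_flip; lia.
  -
    destruct ((Nat.ltb i n && Nat.ltb j n && negb (Nat.eqb i j))%bool) eqn:Hc; [|reflexivity].
    apply andb_prop in Hc as [Hc Hij]. apply andb_prop in Hc as [Hi Hj].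
    apply Nat.ltb_lt in Hi, Hj. apply Bool.negb_true_iff, Nat.eqb_neq in Hij.
    unfold W.
    apply (sum_bij n (fun s => if nth i s false then flip j s else s) (fun s => cnorm2 (psi s))).
    + intros s Hs. destruct (nth i s false); auto. rewrite flip_len; auto.
    + intros s Hs. destruct (nth i s false) eqn:E; [|rewrite E; auto].
      unfold flip at 1. rewrite setbit_nth_neq by auto. rewrite E. apply flip_flip. lia. Qed.

Lemma sumR_app f L1 L2 : sumR f (L1 ++ L2) = sumR f L1 + sumR f L2.
Proof. induction L1; simpl; [ring|rewrite IHL1; ring]. Qed.

Lemma W_psi0 n : W n psi0 = 1.
Proof. unfold W. induction n; simpl.
  - unfold psi0; simpl. unfold cnorm2; simpl. ring.
  - rewrite sumR_app, !sumR_map.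
    rewrite (sumR_ext_in (fun y => cnorm2 (psi0 (true :: y))) (fun _ => 0)).
    + rewrite sumR_zero. rewrite Rplus_0_r. exact IHn.
    + intros. unfold psi0; simpl. unfold cnorm2; simpl. ring. Qed.

Lemma valid_circuit C : valid_dist (circuit_dist C).
Proof. unfold valid_dist, circuit_dist. split.
  - apply Forall_forall. intros wy Hwy. apply in_map_iff in Hwy. destruct Hwy as [s [<- _]].
    apply cnorm2_ge0.
  - set (psi := fold_left _ _ _).
    assert (Hw : W (c_qubits C) psi = 1).
    { unfold psi. generalize psi0 (W_psi0 (c_qubits C)). induction (c_gates C) as [|g gs IH]; simpl; intros p Hp; auto.
      apply IH. rewrite W_gate. auto. }
    rewrite <- Hw. unfold W. generalize (allbits (c_qubits C)). induction l; simpl; auto. rewrite IHl. reflexivity. Qed.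

Section WithA.
Variable A : QPT.

Definition kA (l : nat) : nat := length (c_out (decode_circuit (bc_eval A [unary l] []))).

Definition Dx (x : bits) : Dist :=
  let l := leadn x in let m := S (length x) in
  if Nat.leb (kA l) m then padD (m - kA l) (qpt_dist A (unary l))
  else [(1, repeat false m)].

Lemma valid_fmap f D : valid_dist D -> valid_dist (fmapD f D).
Proof. unfold valid_dist, fmapD. intros [H1 H2]. split.
  - apply Forall_map. eapply Forall_impl; [|exact H1]. simpl; auto.
  - rewrite <- H2. clear. induction D; simpl; auto. rewrite IHD. reflexivity. Qed.

Lemma Dx_valid x : valid_dist (Dx x).
Proof. unfold Dx. destruct (Nat.leb _ _).
  - apply valid_fmap. apply valid_circuit.
  - split; [repeat constructor; simpl; lra|simpl; ring]. Qed.

Lemma circuit_len C : Forall (fun wy => length (snd wy) = length (c_out C)) (circuit_dist C).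
Proof. unfold circuit_dist. apply Forall_map. apply Forall_forall. intros s _. simpl. apply length_map. Qed.

Lemma Dx_support x : Forall (fun wy => length (snd wy) = peval [1%nat; 1%nat] (length x)) (Dx x).
Proof. replace (peval [1%nat; 1%nat] (length x)) with (S (length x)) by (simpl; lia).
  unfold Dx. destruct (Nat.leb _ _) eqn:E.
  - apply Nat.leb_le in E. unfold padD, fmapD. apply Forall_map.
    eapply Forall_impl; [|apply circuit_len]. intros wy H. cbn [snd]. rewrite length_app, repeat_length.
    unfold kA, qpt_dist, bits in *. lia.
  - repeat constructor. simpl. rewrite repeat_length; reflexivity. Qed.

Definition SP : SampProblem :=
  {| sp_len := [1%nat; 1%nat]; sp_dist := Dx; sp_valid := Dx_valid; sp_support := Dx_support |}.

Definition LC := BComp HALF [BComp LEAD [BProjN 0] []] [].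
Definition DESC := BComp A [LC] [].
Definition NF := BComp LEAD [DESC] [].
Definition R1 := BComp DROP [BComp BS1 [] [NF]] [DESC].
Definition KF := BComp LEAD [R1] [].
Definition R2 := BComp DROP [BComp BS1 [] [KF]] [R1].
Definition MF := BComp HALF [BComp PRE [BProjN 0] []] [].
Definition JF := BComp DROP [KF] [MF].
Definition TK := BComp DROP [MF] [KF].
Definition GOOD := BComp APP [NF] [BComp BS0 [] [BComp APP [JF] [BComp APP [KF]
  [BComp BS0 [] [BComp APP [BComp MULT [JF; BComp APP [NF] [F1]] []] [R2]]]]]].
Definition TRIV := BComp BS0 [] [BComp APP [MF] [BComp BS0 [] [BComp MULT [MF; F1] []]]].
Definition QA := BComp BCond [] [TK; GOOD; TRIV].

Section Eval.
Variables (x : bits) (e : nat).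
Let s := enc_pair x (unary e).
Let l := leadn x.
Let d := bc_eval A [unary l] [].
Let n := leadn d.
Let R1v := skipn (S n) d.
Let k := leadn R1v.
Let R2v := skipn (S k) R1v.
Let m := S (length x).

Ltac ev := rewrite bc_eval_comp; cbn [map].

Lemma LC_ev : bc_eval LC [s] [] = unary l.
Proof. unfold LC. ev. ev. rewrite ProjN_eval. cbn [nth]. rewrite LEAD_eval.
  apply HALF_eval. rewrite repeat_length. apply leadn_enc. Qed.
Lemma DESC_ev : bc_eval DESC [s] [] = d.
Proof. unfold DESC. ev. rewrite LC_ev. reflexivity. Qed.
Lemma NF_ev : bc_eval NF [s] [] = repeat true n.
Proof. unfold NF. ev. rewrite DESC_ev. apply LEAD_eval. Qed.
Lemma R1_ev : bc_eval R1 [s] [] = R1v.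
Proof. unfold R1. ev. rewrite DESC_ev. ev. rewrite NF_ev. rewrite DROP_eval. simpl. rewrite repeat_length. reflexivity. Qed.
Lemma KF_ev : bc_eval KF [s] [] = repeat true k.
Proof. unfold KF. ev. rewrite R1_ev. apply LEAD_eval. Qed.
Lemma R2_ev : bc_eval R2 [s] [] = R2v.
Proof. unfold R2. ev. rewrite R1_ev. ev. rewrite KF_ev. rewrite DROP_eval. simpl. rewrite repeat_length. reflexivity. Qed.
Lemma MF_ev : bc_eval MF [s] [] = unary m.
Proof. unfold MF. ev. ev. rewrite PRE_eval, ProjN_eval. cbn [nth]. unfold s. rewrite pref_enc.
  apply HALF_eval. left. unfold unary. rewrite repeat_length. unfold m. lia. Qed.
Lemma skipn_repeat {T} (a : T) i j : skipn i (repeat a j) = repeat a (j - i).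
Proof. revert j; induction i; intros [|j]; simpl; auto. Qed.
Lemma JF_ev : bc_eval JF [s] [] = repeat true (m - k).
Proof. unfold JF. ev. rewrite KF_ev, MF_ev, DROP_eval, repeat_length. apply skipn_repeat. Qed.
Lemma TK_ev : bc_eval TK [s] [] = repeat true (k - m).
Proof. unfold TK. ev. rewrite KF_ev, MF_ev, DROP_eval. unfold unary; rewrite repeat_length. apply skipn_repeat. Qed.
Lemma GOOD_ev : bc_eval GOOD [s] [] =
  repeat true n ++ false :: (repeat true (m - k) ++ (repeat true k ++ false ::
     (concat (repeat (repeat true n ++ [false]) (m - k)) ++ R2v))).
Proof. unfold GOOD. ev. rewrite NF_ev. ev. ev. rewrite JF_ev. ev. rewrite KF_ev. ev. ev.
  rewrite R2_ev. ev. rewrite JF_ev. ev. rewrite NF_ev, F1_eval.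
  rewrite !APP_eval, MULT_eval, repeat_length. reflexivity. Qed.
Lemma TRIV_ev : bc_eval TRIV [s] [] = false :: (unary m ++ false :: concat (repeat [false] m)).
Proof. unfold TRIV. ev. ev. rewrite MF_ev. ev. ev. rewrite MF_ev, F1_eval, MULT_eval, APP_eval.
  unfold unary; rewrite repeat_length. reflexivity. Qed.

Lemma kA_eq : kA l = k.
Proof. unfold kA. fold d.
  destruct (read_nums k R2v) as [outs r2] eqn:E.
  rewrite (decode_eq d n R1v k R2v outs r2); auto.
  - simpl. pose proof (read_nums_len k R2v). rewrite E in H. auto.
  - apply read_unary_eq.
  - apply read_unary_eq. Qed.

Lemma QA_dist : qpt_dist QA s = Dx x.
Proof. unfold qpt_dist, QA. rewrite bc_eval_comp. cbn [map]. rewrite TK_ev, GOOD_ev, TRIV_ev.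
  unfold Dx. fold l. rewrite kA_eq. fold m.
  destruct (Nat.leb k m) eqn:E.
  - apply Nat.leb_le in E. replace (k - m)%nat with 0%nat by lia. simpl bc_eval.
    destruct (read_nums k R2v) as [outs r2] eqn:E2.
    rewrite (decode_eq _ n (repeat true (m - k) ++ (repeat true k ++ false :: (concat (repeat (repeat true n ++ [false]) (m - k)) ++ R2v))) (m - k + k) (concat (repeat (repeat true n ++ [false]) (m - k)) ++ R2v) (repeat n (m - k) ++ outs) r2).
    + rewrite circuit_pad. unfold qpt_dist. fold d.
      rewrite (decode_eq d n R1v k R2v outs r2); auto; apply read_unary_eq.
    + apply read_unary_app.
    + rewrite app_assoc, <- repeat_app. apply read_unary_app.
    + rewrite read_nums_pad, E2. reflexivity.
  - apply Nat.leb_gt in E. replace (k - m)%nat with (S (k - m - 1)) by lia. simpl bc_eval.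
    rewrite (decode_eq _ 0 (unary m ++ false :: concat (repeat [false] m)) m (concat (repeat [false] m)) (repeat 0%nat m) []).
    + unfold circuit_dist. simpl. unfold psi0, cnorm2. simpl. f_equal. f_equal.
      * ring.
      * f_equal. clear. induction (length x) as [|j IH]; simpl; auto. rewrite IH. reflexivity.
    + reflexivity.
    + apply (read_unary_app m).
    + pose proof (read_nums_pad 0 m 0 []) as H. rewrite Nat.add_0_r, app_nil_r in H.
      change (repeat true 0 ++ [false]) with [false] in H. rewrite H.
      change (fst (read_nums 0 [])) with (@nil nat). rewrite app_nil_r. reflexivity. Qed.
End Eval.

Lemma SP_BQP : SampBQP SP.
Proof. exists QA. intros x eps Heps. simpl. rewrite QA_dist, SD_self. lra. Qed.

End WithA.

Lemma floor_INR n : floor_nat (INR n) = n.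
Proof. unfold floor_nat, Int_part.
  rewrite <- (tech_up (INR n) (Z.of_nat n + 1)).
  - rewrite Z.add_simpl_r. apply Nat2Z.id.
  - rewrite plus_IZR, <- INR_IZR_INZ. simpl. lra.
  - rewrite plus_IZR, <- INR_IZR_INZ. simpl. lra. Qed.

Lemma leadn_app l r : leadn (repeat true l ++ false :: r) = l.
Proof. induction l; simpl; auto. Qed.

Lemma length_enc x y : length (enc_pair x y) = (2 * length x + 2 + length y)%nat.
Proof. unfold enc_pair. rewrite length_app. simpl.
  induction x; simpl; [lia|]. lia. Qed.

Lemma kA_gen A l : let d := bc_eval A [unary l] [] in kA A l = leadn (skipn (S (leadn d)) d).
Proof. intros d. unfold kA. fold d.
  set (R1v := skipn (S (leadn d)) d). set (k := leadn R1v).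
  destruct (read_nums k (skipn (S k) R1v)) as [outs r2] eqn:E.
  rewrite (decode_eq d (leadn d) R1v k (skipn (S k) R1v) outs r2); auto.
  - simpl. pose proof (read_nums_len k (skipn (S k) R1v)). rewrite E in H. auto.
  - apply read_unary_eq.
  - apply read_unary_eq. Qed.

Lemma leadn_le s : (leadn s <= length s)%nat.
Proof. induction s as [|[|] s IH]; simpl; lia. Qed.

Section WithB.
Variables (A : QPT) (B : PPT) (p PA : natpoly).

Definition xl (l : nat) : bits := unary l ++ false :: unary (peval PA l).
Definition XL := BComp APP [BProjN 0] [BComp BS0 [] [POLY PA]].
Definition ENC := BComp APP [BComp DBL [XL] []] [BComp BS1 [] [BComp BS0 [] [POLY p]]].
Definition OUT := BComp (ppt_prog B) [ENC; BProjN 1] [].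
Definition DESC' := BComp A [BProjN 0] [].
Definition K' := BComp LEAD [BComp DROP [BComp BS1 [] [BComp LEAD [DESC'] []]] [DESC']] [].
Definition JJ := BComp DROP [K'] [BComp BS1 [] [XL]].
Definition BP := BComp DROP [JJ] [OUT].
Definition EP : natpoly := padd [4%nat; 2%nat] (padd (pscale 2 PA) p).
Definition B' : PPT := {| ppt_prog := BP; ppt_rand := pcomp (ppt_rand B) EP |}.

Ltac ev := rewrite bc_eval_comp; cbn [map].

Section Ev.
Variables (l : nat) (r : bits).
Let xs := [unary l; r].
Lemma XL_ev : bc_eval XL xs [] = xl l.
Proof. unfold XL. ev. ev. rewrite ProjN_eval. cbn [nth]. unfold xs. rewrite POLY_eval, APP_eval. reflexivity. Qed.
Lemma ENC_ev : bc_eval ENC xs [] = enc_pair (xl l) (unary (peval p l)).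
Proof. unfold ENC. ev. ev. rewrite XL_ev, DBL_eval. ev. ev. unfold xs. rewrite POLY_eval, APP_eval. reflexivity. Qed.
Lemma OUT_ev : bc_eval OUT xs [] = bc_eval (ppt_prog B) [enc_pair (xl l) (unary (peval p l)); r] [].
Proof. unfold OUT. ev. rewrite ENC_ev. reflexivity. Qed.
Lemma K'_ev : bc_eval K' xs [] = repeat true (kA A l).
Proof. unfold K'. ev. ev. ev. ev. unfold DESC'. ev. rewrite ProjN_eval. cbn [nth].
  rewrite LEAD_eval, DROP_eval, LEAD_eval. rewrite kA_gen. simpl. rewrite repeat_length. reflexivity. Qed.
Lemma BP_ev : bc_eval BP xs [] =
  skipn (S (length (xl l)) - kA A l) (bc_eval (ppt_prog B) [enc_pair (xl l) (unary (peval p l)); r] []).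
Proof. unfold BP. ev. unfold JJ. ev. ev. rewrite K'_ev, XL_ev, OUT_ev, !DROP_eval.
  rewrite length_skipn, repeat_length. reflexivity. Qed.
End Ev.

Lemma B'_dist l : ppt_dist B' (unary l) =
  fmapD (skipn (S (length (xl l)) - kA A l)) (ppt_dist B (enc_pair (xl l) (unary (peval p l)))).
Proof. unfold ppt_dist, fmapD. simpl ppt_rand. simpl ppt_prog.
  replace (peval (pcomp (ppt_rand B) EP) (length (unary l)))
    with (peval (ppt_rand B) (length (enc_pair (xl l) (unary (peval p l))))).
  - rewrite map_map. apply map_ext. intros r. simpl. f_equal. apply BP_ev.
  - rewrite peval_pcomp. f_equal. rewrite length_enc. unfold xl, EP, unary.
    rewrite length_app, !repeat_length. cbn [length]. rewrite repeat_length, !peval_padd, peval_pscale. simpl peval. lia. Qed.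
End WithB.

Lemma fmap_pad j D : fmapD (skipn j) (padD j D) = D.
Proof. unfold padD, fmapD. rewrite map_map. simpl. rewrite <- (map_id D) at 2. apply map_ext.
  intros [w y]. simpl. f_equal. induction j; simpl; auto. Qed.

Lemma notBPP (Sigma : nat -> Prop) (Hinf : forall N : nat, exists l : nat, (N <= l)%nat /\ Sigma l)
  A (HA : QAS Sigma A) : ~ SampBPP (SP A).
Proof.
  intros [B HB]. destruct HA as [p [Hp HQ]]. destruct (bc_bound A) as [PA HPA].
  destruct (HQ (B' A B p PA)) as [lstar HQ']. destruct (Hinf lstar) as [l [Hl HS]].
  specialize (HQ' l Hl HS).
  assert (Heps : 0 < / INR (peval p l)).
  { apply Rinv_0_lt_compat. apply lt_0_INR. apply Hp. }
  specialize (HB (xl PA l) _ Heps). rewrite Rinv_inv, floor_INR in HB.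
  rewrite B'_dist in HQ'. simpl sp_dist in HB.
  assert (HD : Dx A (xl PA l) = padD (S (length (xl PA l)) - kA A l) (qpt_dist A (unary l))).
  { assert (Hlx : leadn (xl PA l) = l) by (unfold xl; apply leadn_app).
    unfold Dx. cbv zeta. rewrite Hlx.
    assert (Hk : (kA A l <= S (length (xl PA l)))%nat).
    { rewrite kA_gen. cbv zeta.
      set (d := bc_eval A [unary l] []).
      pose proof (HPA [unary l] []) as H. simpl in H. fold d in H.
      pose proof (leadn_le (skipn (S (leadn d)) d)). rewrite length_skipn in H0.
      unfold xl. rewrite length_app. cbn [length]. unfold unary. rewrite !repeat_length. rewrite Nat.add_0_r in H. unfold unary in H; rewrite repeat_length in H. unfold bits in *. replace (l + 0)%nat with l in H by lia. lia. }
    apply Nat.leb_le in Hk. rewrite Hk. reflexivity. }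
  rewrite HD in HB.
  rewrite <- (fmap_pad (S (length (xl PA l)) - kA A l) (qpt_dist A (unary l))) in HQ'.
  rewrite SD_sym in HQ'.
  pose proof (SD_dp (skipn (S (length (xl PA l)) - kA A l))
     (ppt_dist B (enc_pair (xl PA l) (unary (peval p l))))
     (padD (S (length (xl PA l)) - kA A l) (qpt_dist A (unary l)))).
  lra.
Qed.

Theorem lemma3p4 (Sigma : nat -> Prop)
  (Hinf : forall N : nat, exists l : nat, (N <= l)%nat /\ Sigma l)
  (Hqas : exists A : QPT, QAS Sigma A) :
  ~ (forall S : SampProblem, SampBPP S <-> SampBQP S).
Proof.
  intros H. destruct Hqas as [A HA]. apply (notBPP Sigma Hinf A HA).
  apply H. apply SP_BQP.
Qed.
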